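(* The dcpo $\mathcal Q\mathbb R_\ell$, with its Scott topology, is sober.
   Context: The Sorgenfrey line $\mathbb R_\ell$ is $\mathbb R$ with the topology generated by the half-open intervals $[a,b[$, $a<b$. $\mathcal Q\mathbb R_\ell$ is the set of non-empty compact subsets of $\mathbb R_\ell$ ordered by reverse inclusion; it is a dcpo. A space is sober if every irreducible closed subset is the closure of a unique point. *)

(* Defs.v *)
From Stdlib Require Import Reals List.
Open Scope R_scope.

(* U is open in R_l iff it is a union of half-open intervals [a,b[, i.e.
   every x in U has some b > x with [x,b[ contained in U. *)
Definition sorgenfrey_open (U : R -> Prop) : Prop :=
  forall x, U x -> exists b, x < b /\ forall y, x <= y < b -> U y.

Definition sorgenfrey_compact (K : R -> Prop) : Prop :=
  forall (I : Type) (V : I -> R -> Prop),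
    (forall i, sorgenfrey_open (V i)) ->
    (forall x, K x -> exists i, V i x) ->
    exists l : list I, forall x, K x -> exists i, In i l /\ V i x.

Definition QRl : Type :=
  { K : R -> Prop | (exists x, K x) /\ sorgenfrey_compact K }.

Definition QRl_le (K L : QRl) : Prop :=
  forall x, proj1_sig L x -> proj1_sig K x.

Definition directed {T : Type} (le : T -> T -> Prop) (D : T -> Prop) : Prop :=
  (exists d, D d) /\
  forall a b, D a -> D b -> exists c, D c /\ le a c /\ le b c.

Definition is_sup {T : Type} (le : T -> T -> Prop) (D : T -> Prop) (s : T) : Prop :=
  (forall d, D d -> le d s) /\
  (forall u, (forall d, D d -> le d u) -> le s u).

Definition scott_open {T : Type} (le : T -> T -> Prop) (U : T -> Prop) : Prop :=
  (forall x y, U x -> le x y -> U y) /\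
  (forall (D : T -> Prop) (s : T), directed le D -> is_sup le D s -> U s ->
     exists d, D d /\ U d).

Definition is_closed {T : Type} (opn : (T -> Prop) -> Prop) (C : T -> Prop) : Prop :=
  opn (fun x => ~ C x).

Definition irreducible_closed {T : Type} (opn : (T -> Prop) -> Prop)
  (C : T -> Prop) : Prop :=
  is_closed opn C /\ (exists x, C x) /\
  forall A B, is_closed opn A -> is_closed opn B ->
    (forall x, C x -> A x \/ B x) ->
    (forall x, C x -> A x) \/ (forall x, C x -> B x).

Definition closure_pt {T : Type} (opn : (T -> Prop) -> Prop) (x : T) : T -> Prop :=
  fun y => forall C, is_closed opn C -> C x -> C y.

Definition sober {T : Type} (opn : (T -> Prop) -> Prop) : Prop :=
  forall C, irreducible_closed opn C ->
    exists! x : T, forall y, C y <-> closure_pt opn x y.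

(* Main.v *)
Require Import Defs.
From Stdlib Require Import Reals Lra List Classical FunctionalExtensionality PropExtensionality ProofIrrelevance.
Open Scope R_scope.

Definition S (K : QRl) : R -> Prop := proj1_sig K.

Definition clopen (U : R -> Prop) := sorgenfrey_open U /\ sorgenfrey_open (fun x => ~ U x).

Lemma S_cpt (K : QRl) : sorgenfrey_compact (S K).
Proof. exact (proj2 (proj2_sig K)). Qed.

Lemma S_ne (K : QRl) : exists x, S K x.
Proof. exact (proj1 (proj2_sig K)). Qed.

Lemma compact_ext K K' : (forall x, K x <-> K' x) -> sorgenfrey_compact K -> sorgenfrey_compact K'.
Proof.
  intros He HK I V HV Hc. destruct (HK I V HV) as [l Hl].
  - intros x Kx. apply Hc, He, Kx.
  - exists l. intros x Kx. apply Hl, He, Kx.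
Qed.

Lemma compact_inter_closed K O : sorgenfrey_compact K -> sorgenfrey_open O ->
  sorgenfrey_compact (fun x => K x /\ ~ O x).
Proof.
  intros HK HO I V HV Hcov.
  destruct (HK (option I) (fun o => match o with Some i => V i | None => O end)) as [l Hl].
  - intros [i|]; auto.
  - intros x Kx. destruct (classic (O x)) as [Ox|nOx].
    + exists None; exact Ox.
    + destruct (Hcov x (conj Kx nOx)) as [i Hi]. exists (Some i). exact Hi.
  - exists (flat_map (fun o => match o with Some i => i :: nil | None => nil end) l).
    intros x [Kx nOx]. destruct (Hl x Kx) as [[i|] [Hin Hv]].
    + exists i. split; auto. apply in_flat_map. exists (Some i). simpl; auto.
    + contradiction.
Qed.

Lemma list_min x (l : list R) : exists m, x < m /\ forall b, In b l -> x < b -> m <= b.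
Proof.
  induction l as [|a l [m [Hm H]]].
  - exists (x+1). split; [lra| intros b []].
  - destruct (Rlt_dec x a).
    + exists (Rmin a m). split. apply Rmin_glb_lt; auto.
      intros b [<-|Hb] Hxb. apply Rmin_l. eapply Rle_trans. apply Rmin_r. auto.
    + exists m. split; auto. intros b [<-|Hb] Hxb. contradiction. auto.
Qed.

Lemma compact_closed K : sorgenfrey_compact K -> sorgenfrey_open (fun x => ~ K x).
Proof.
  intros HK x nKx.
  destruct (HK R (fun b => fun y => y < x \/ (x < b /\ b <= y))) as [l Hl].
  - intros b y [Hy|[Hb Hy]].
    + exists x. split; auto. intros z Hz; left; lra.
    + exists (y+1). split; [lra|]. intros z Hz; right; lra.
  - intros y Ky. destruct (Rtotal_order y x) as [H|[H|H]].
    + exists x; left; auto.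
    + subst; contradiction.
    + exists y. right. split; lra.
  - destruct (list_min x l) as [m [Hm H]].
    exists m. split; auto. intros y [Hy1 Hy2] Ky.
    destruct (Hl y Ky) as [b [Hin [Hb|[Hb1 Hb2]]]]. lra.
    specialize (H b Hin Hb1). lra.
Qed.

Lemma directed_list (D : QRl -> Prop) : directed QRl_le D -> forall l : list QRl,
  exists e, D e /\ forall d, In d l -> D d -> forall x, S e x -> S d x.
Proof.
  intros HD l. induction l as [|a l [e [De He]]].
  - destruct (proj1 HD) as [d Hd]. exists d. split; auto. intros d' [].
  - destruct (classic (D a)) as [Da|nDa].
    + destruct (proj2 HD a e Da De) as [c [Dc [H1 H2]]].
      exists c. split; auto. intros d [<-|Hin] Dd x Hx.
      * apply H1; exact Hx.
      * apply (He d Hin Dd). apply H2; exact Hx.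
    + exists e. split; auto. intros d [<-|Hin] Dd. contradiction. auto.
Qed.

Lemma key (D : QRl -> Prop) (W : R -> Prop) : directed QRl_le D -> sorgenfrey_open W ->
  (forall x, (forall d, D d -> S d x) -> W x) ->
  exists e, D e /\ forall y, S e y -> W y.
Proof.
  intros HD HW Hsub.
  destruct (proj1 HD) as [d0 Hd0].
  pose proof (compact_inter_closed _ _ (S_cpt d0) HW) as Hc.
  destruct (Hc QRl (fun d x => D d /\ ~ S d x)) as [l Hl].
  - intros d x [Dd nx]. destruct (compact_closed _ (S_cpt d) x nx) as [b [hb H]].
    exists b; split; auto; intros y Hy; split; auto.
  - intros x [Kx nW].
    destruct (not_all_ex_not _ _ (fun H => nW (Hsub x H))) as [d Hd].
    exists d. apply imply_to_and in Hd. exact Hd.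
  - destruct (directed_list D HD (d0 :: l)) as [e [De He]].
    exists e. split; auto. intros y Hy. apply NNPP; intro nW.
    assert (Hy0 : S d0 y) by (apply (He d0 (or_introl eq_refl) Hd0); auto).
    destruct (Hl y (conj Hy0 nW)) as [i [Hin [Di ni]]].
    apply ni. apply (He i (or_intror Hin) Di). exact Hy.
Qed.

Lemma open_union (I : Type) (V : I -> R -> Prop) : (forall i, sorgenfrey_open (V i)) ->
  sorgenfrey_open (fun x => exists i, V i x).
Proof.
  intros HV x [i Hi]. destruct (HV i x Hi) as [b [hb H]].
  exists b. split; auto. intros y Hy. exists i. auto.
Qed.

Lemma inter_QRl (D : QRl -> Prop) : directed QRl_le D ->
  exists s : QRl, (forall x, S s x <-> forall d, D d -> S d x).
Proof.
  intros HD.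
  set (P := fun x => forall d, D d -> S d x).
  assert (ne : exists x, P x).
  { apply NNPP; intro Hn.
    destruct (key D (fun _ => False) HD) as [e [De He]].
    - intros x []. 
    - intros x Px. apply Hn. exists x. exact Px.
    - destruct (S_ne e) as [y Hy]. exact (He y Hy). }
  assert (cpt : sorgenfrey_compact P).
  { destruct (proj1 HD) as [d0 Hd0].
    apply (compact_ext (fun x => S d0 x /\ ~ (exists d, D d /\ ~ S d x))).
    - intros x. split.
      + intros [H0 H1] d Dd. apply NNPP; intro n. apply H1. exists d; auto.
      + intros H. split. apply H; auto. intros [d [Dd n]]. apply n, H, Dd.
    - apply compact_inter_closed. apply S_cpt.
      apply (open_union QRl (fun d x => D d /\ ~ S d x)).
      intros d x [Dd nx]. destruct (compact_closed _ (S_cpt d) x nx) as [b [hb H]].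
      exists b; split; auto; intros y Hy; split; auto. }
  exists (exist _ P (conj ne cpt)). intros x. reflexivity.
Qed.

Lemma sup_of (D : QRl -> Prop) s : (forall x, S s x <-> forall d, D d -> S d x) ->
  is_sup QRl_le D s.
Proof.
  intros H. split.
  - intros d Dd x Hx. apply (proj1 (H x) Hx d Dd).
  - intros u Hu x Hx. apply (proj2 (H x)). intros d Dd. apply (Hu d Dd x Hx).
Qed.

Lemma sup_eq (D : QRl -> Prop) s : directed QRl_le D -> is_sup QRl_le D s ->
  forall x, S s x <-> forall d, D d -> S d x.
Proof.
  intros HD Hs x. split.
  - intros Hx d Dd. apply (proj1 Hs d Dd x Hx).
  - intros Hx. destruct (inter_QRl D HD) as [s' Hs'].
    apply (proj2 Hs s' (proj1 (sup_of D s' Hs'))). apply Hs'. exact Hx.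
Qed.

Section Closed.
Variable C : QRl -> Prop.
Hypothesis HC : is_closed (scott_open QRl_le) C.

Lemma C_down x y : C y -> QRl_le x y -> C x.
Proof.
  intros Cy Hle. apply NNPP; intro n. exact (proj1 HC x y n Hle Cy).
Qed.

Lemma C_sup D s : directed QRl_le D -> (forall d, D d -> C d) -> is_sup QRl_le D s -> C s.
Proof.
  intros HD HDC Hs. apply NNPP; intro n.
  destruct (proj2 HC D s HD Hs n) as [d [Dd nd]]. exact (nd (HDC d Dd)).
Qed.
End Closed.

Lemma scott_open_ext (P Q : QRl -> Prop) : (forall K, P K <-> Q K) ->
  scott_open QRl_le P -> scott_open QRl_le Q.
Proof.
  intros He [H1 H2]. split.
  - intros x y Qx Hle. apply He. apply (H1 x y); auto. apply He; auto.
  - intros D s HD Hs Qs. destruct (H2 D s HD Hs) as [d [Dd Pd]]. apply He; auto.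
    exists d. split; auto. apply He; auto.
Qed.

Lemma box_open W : sorgenfrey_open W ->
  scott_open QRl_le (fun K => forall x, S K x -> W x).
Proof.
  intros HW. split.
  - intros x y Hx Hle z Hz. apply Hx, Hle, Hz.
  - intros D s HD Hs Hsub. apply (key D W HD HW).
    intros x Hx. apply Hsub. apply (proj2 (sup_eq D s HD Hs x)). exact Hx.
Qed.

Lemma mk_inter (K : QRl) (W : R -> Prop) : sorgenfrey_open (fun x => ~ W x) ->
  (exists x, S K x /\ W x) -> exists M : QRl, forall x, S M x <-> S K x /\ W x.
Proof.
  intros HW Hne.
  assert (cpt : sorgenfrey_compact (fun x => S K x /\ W x)).
  { apply (compact_ext (fun x => S K x /\ ~ ~ W x)).
    - intros x. split; intros [a b]; split; auto. apply NNPP; auto.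
    - apply compact_inter_closed; auto. apply S_cpt. }
  exists (exist _ (fun x => S K x /\ W x) (conj Hne cpt)). intros x; reflexivity.
Qed.

Definition Bset (C : QRl -> Prop) (W : R -> Prop) (K : QRl) : Prop :=
  exists M, C M /\ forall x, S M x <-> (S K x /\ W x).

Lemma Bset_closed C W : is_closed (scott_open QRl_le) C -> sorgenfrey_open (fun x => ~ W x) ->
  is_closed (scott_open QRl_le) (Bset C W).
Proof.
  intros HC HW. split.
  - intros x y nBx Hle [M [CM HM]]. apply nBx.
    destruct (mk_inter x W HW) as [M' HM'].
    { destruct (S_ne M) as [z Hz]. apply HM in Hz. exists z. split; [apply Hle|]; apply Hz. }
    exists M'. split; auto. apply (C_down C HC _ M CM).
    intros z Hz. apply HM in Hz. apply HM'. split; [apply Hle|]; apply Hz.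
  - intros D s HD Hs nBs. apply NNPP; intro Hall.
    assert (HB : forall d, D d -> Bset C W d).
    { intros d Dd. apply NNPP; intro n. apply Hall. exists d; auto. }
    set (D' := fun M => C M /\ exists d, D d /\ forall x, S M x <-> S d x /\ W x).
    assert (HD' : directed QRl_le D').
    { split.
      - destruct (proj1 HD) as [d0 Hd0]. destruct (HB d0 Hd0) as [M [CM HM]].
        exists M. split; auto. exists d0; auto.
      - intros M1 M2 [C1 [d1 [D1 H1]]] [C2 [d2 [D2 H2]]].
        destruct (proj2 HD d1 d2 D1 D2) as [d3 [D3 [L1 L2]]].
        destruct (HB d3 D3) as [M3 [C3 H3]].
        exists M3. split. split; auto. exists d3; auto.
        split; intros x Hx; apply H3 in Hx; [apply H1|apply H2]; split;
          [apply L1|apply Hx|apply L2|apply Hx]; apply Hx. }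
    destruct (inter_QRl D' HD') as [s' Hs'].
    apply nBs. exists s'. split.
    + apply (C_sup C HC D' s' HD'). intros M [CM _]; auto. apply sup_of; auto.
    + intros x. rewrite Hs'. split.
      * intros Hx. destruct (proj1 HD) as [d0 Hd0]. destruct (HB d0 Hd0) as [M0 [CM0 HM0]].
        assert (HW0 : W x).
        { apply (HM0 x). apply Hx. split; auto. exists d0; auto. }
        split; auto. apply (proj2 (sup_eq D s HD Hs x)). intros d Dd.
        destruct (HB d Dd) as [M [CM HM]]. apply (HM x). apply Hx. split; auto. exists d; auto.
      * intros [Sx Wx] M [CM [d [Dd HM]]]. apply HM. split; auto.
        apply (proj1 Hs d Dd x Sx).
Qed.

Lemma irr_B C W L2 L : irreducible_closed (scott_open QRl_le) C -> clopen W ->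
  C L2 -> (forall x, S L2 x -> W x) -> C L -> Bset C W L.
Proof.
  intros [HC [_ HI]] [HW1 HW2] CL2 HL2 CL.
  set (A := fun K => ~ (forall x, S K x -> W x)).
  assert (HA : is_closed (scott_open QRl_le) A).
  { unfold is_closed. apply (scott_open_ext (fun K => forall x, S K x -> W x)).
    - intros K. split; [intros h n; exact (n h)| intros h; apply NNPP; exact h].
    - apply box_open; auto. }
  destruct (HI A (Bset C W) HA (Bset_closed C W HC HW2)) as [H|H].
  - intros K CK. destruct (classic (forall x, S K x -> W x)) as [Hb|Hb].
    + right. exists K. split; auto. intros x; split; auto. intros [a b]; auto.
    + left; exact Hb.
  - exfalso. apply (H L2 CL2 HL2).
  - apply H; auto.
Qed.

Lemma clopen_and U V : clopen U -> clopen V -> clopen (fun x => U x /\ V x).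
Proof.
  intros [U1 U2] [V1 V2]. split.
  - intros x [Ux Vx].
    destruct (U1 x Ux) as [b1 [h1 H1]]. destruct (V1 x Vx) as [b2 [h2 H2]].
    exists (Rmin b1 b2). split. apply Rmin_glb_lt; auto.
    pose proof (Rmin_l b1 b2). pose proof (Rmin_r b1 b2).
    intros y Hy. split; [apply H1|apply H2]; lra.
  - intros x Hx. destruct (classic (U x)) as [Ux|nUx].
    + assert (nVx : ~ V x) by (intro; apply Hx; auto).
      destruct (V2 x nVx) as [b [hb H]]. exists b. split; auto.
      intros y Hy [_ Vy]. exact (H y Hy Vy).
    + destruct (U2 x nUx) as [b [hb H]]. exists b. split; auto.
      intros y Hy [Uy _]. exact (H y Hy Uy).
Qed.

Lemma clopen_full : clopen (fun _ => True).
Proof.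
  split.
  - intros x _. exists (x+1). split; [lra| auto].
  - intros x H. exfalso. apply H; trivial.
Qed.

Lemma clopen_gap x b : x < b -> clopen (fun y => ~ (x <= y < b)).
Proof.
  intros hb. split.
  - intros y Hy. destruct (Rlt_dec y x).
    + exists x. split; auto. intros z Hz. lra.
    + assert (b <= y) by (apply Rnot_lt_le; intro; apply Hy; lra).
      exists (y+1). split; [lra|]. intros z Hz. lra.
  - intros y Hy. apply NNPP in Hy. exists b. split; [lra|]. intros z Hz n. apply n. lra.
Qed.

Lemma meet C L1 L2 : irreducible_closed (scott_open QRl_le) C -> C L1 -> C L2 ->
  exists M, C M /\ forall x, S M x <-> S L1 x /\ S L2 x.
Proof.
  intros HI C1 C2. pose proof (proj1 HI) as HC.
  set (D := fun M => C M /\ exists U, clopen U /\ (forall x, S L2 x -> U x) /\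
                     forall x, S M x <-> S L1 x /\ U x).
  assert (HD : directed QRl_le D).
  { split.
    - exists L1. split; auto. exists (fun _ => True). split. apply clopen_full.
      split; auto. intros x; split; auto. intros [a _]; auto.
    - intros M1 M2 [_ [U1 [CU1 [L2U1 H1]]]] [_ [U2 [CU2 [L2U2 H2]]]].
      pose proof (clopen_and U1 U2 CU1 CU2) as CU.
      destruct (irr_B C _ L2 L1 HI CU C2 (fun x h => conj (L2U1 x h) (L2U2 x h)) C1)
        as [M [CM HM]].
      exists M. split.
      + split; auto. exists (fun x => U1 x /\ U2 x). split; auto.
      + split; intros x Hx; apply HM in Hx; [apply H1|apply H2]; split; apply Hx. }
  destruct (inter_QRl D HD) as [s Hs].
  exists s. split.
  - apply (C_sup C HC D s HD). intros d [Cd _]; auto. apply sup_of; auto.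
  - intros x. rewrite Hs. split.
    + intros Hx. split.
      * apply Hx. split; auto. exists (fun _ => True). split. apply clopen_full.
        split; auto. intros y; split; auto. intros [a _]; auto.
      * apply NNPP; intro n.
        destruct (compact_closed _ (S_cpt L2) x n) as [b [hb Hb]].
        assert (CU := clopen_gap x b hb).
        assert (L2U : forall y, S L2 y -> ~ (x <= y < b)).
        { intros y Hy Hr. exact (Hb y Hr Hy). }
        destruct (irr_B C _ L2 L1 HI CU C2 L2U C1) as [M [CM HM]].
        assert (HMx : S M x).
        { apply Hx. split; auto. exists (fun y => ~ (x <= y < b)). auto. }
        apply HM in HMx. apply (proj2 HMx). lra.
    + intros [x1 x2] M [_ [U [_ [L2U HM]]]]. apply HM. split; auto.
Qed.

Lemma closure_le x y : closure_pt (scott_open QRl_le) x y <-> QRl_le y x.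
Proof.
  split.
  - intros H. apply (H (fun z => QRl_le z x)).
    + split.
      * intros z z' n Hle Hz'. apply n. intros w Hw. apply Hle, Hz', Hw.
      * intros D s HD Hs n. apply NNPP; intro Hn. apply n. apply (proj2 Hs).
        intros d Dd. apply NNPP; intro m. apply Hn. exists d; auto.
    + intros w Hw; exact Hw.
  - intros Hle C HC Cx. apply (C_down C HC y x Cx Hle).
Qed.

Lemma QRl_antisym a b : QRl_le a b -> QRl_le b a -> a = b.
Proof.
  destruct a as [A pa], b as [B pb]. unfold QRl_le; simpl. intros H1 H2.
  assert (A = B).
  { apply functional_extensionality. intros x.
    apply propositional_extensionality. split; auto. }
  subst. f_equal. apply proof_irrelevance.
Qed.

Theorem proposition4p23 : sober (scott_open QRl_le).
Proof.
  intros C HI. pose proof (proj1 HI) as HC.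
  assert (HD : directed QRl_le C).
  { split. exact (proj1 (proj2 HI)).
    intros a b Ca Cb. destruct (meet C a b HI Ca Cb) as [M [CM HM]].
    exists M. split; auto. split; intros x Hx; apply HM in Hx; apply Hx. }
  destruct (inter_QRl C HD) as [s Hs].
  assert (Cs : C s) by (apply (C_sup C HC C s HD); auto; apply sup_of; auto).
  assert (Hch : forall y, C y <-> closure_pt (scott_open QRl_le) s y).
  { intros y. rewrite closure_le. split.
    - intros Cy x Hx. exact (proj1 (Hs x) Hx y Cy).
    - intros Hle. apply (C_down C HC y s Cs Hle). }
  exists s. split; auto.
  intros x' Hx'. apply QRl_antisym.
  - apply closure_le. apply Hx'. exact Cs.
  - apply closure_le. apply Hch. apply Hx'. intros C' _ h; exact h.
Qed.
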